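(* Let $\lambda\neq\mu$ be partitions of $n$. Then the irreducible $S_n$-representations $V_\lambda$ and $V_\mu$ have different sign signatures.
   Context: $V_\lambda$ is the irreducible complex representation of $S_n$ indexed by the partition $\lambda$ in the standard way ($V_{[1,\dots,1]}$ the sign representation). The sign signature of a representation $V$ of $S_n$ is the set of parabolic subgroups $P$ (subgroups generated by subsets of the simple transpositions $(i,i+1)$, i.e. products $S_{p_1}\times\cdots\times S_{p_k}$ of symmetric groups on consecutive blocks of indices) such that $\dim\operatorname{Hom}_P(\operatorname{sgn}_P,V)>0$, where $\operatorname{sgn}_P$ is the sign representation of $P$. *)

(* Defs.v *)
From HB Require Import structures.
From mathcomp Require Import all_boot all_order all_algebra all_fingroup all_solvable all_field all_character.
Set Implicit Arguments. Unset Strict Implicit. Unset Printing Implicit Defensive.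
Import Order.TTheory GRing.Theory Num.Theory.
Local Open Scope ring_scope.

Definition is_part (n : nat) (la : seq nat) : bool :=
  [&& sorted geq la, all (fun p => 0 < p)%N la & sumn la == n].

Definition conj_part (la : seq nat) : seq nat :=
  [seq count (fun p => i < p)%N la | i <- iota 0 (head 0%N la)].

Definition psums (a : seq nat) : seq nat :=
  [seq sumn (take k a) | k <- iota 1 (size a)].

Section Sn.
Variable n : nat.
Local Notation gT := {perm 'I_n}.
Local Notation G := [set: {perm 'I_n}].

Definition simple_transp (i : 'I_n) : gT := tperm i (insubd i i.+1).

Definition parabolic (J : {set 'I_n}) : {group gT} :=
  <<[set simple_transp i | i in [set i in J | (i.+1 < n)%N]]>>%G.

(* The Young subgroup S_{a_1} x S_{a_2} x ... on consecutive blocks of sizes a_i: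
   it is generated by the s_i with i, i+1 in the same block. *)
Definition young_set (a : seq nat) : {set 'I_n} :=
  [set i : 'I_n | (i.+1 < n)%N && (i.+1 \notin psums a)].
Definition young (a : seq nat) : {group gT} := parabolic (young_set a).

Definition sgnC (x : gT) : algC := (-1) ^+ odd_perm x.

(* dim Hom_P(f, V) for V with character chi and f a linear character of P:
   the inner product '[Res_P chi, f]_P, unfolded. *)
Definition hom_dim (chi : 'CF(G)) (P : {set gT}) (f : gT -> algC) : algC :=
  #|P|%:R^-1 * \sum_(x in P) chi x * (f x)^*.

(* V_lambda is the (unique) irreducible representation occurring both in
   Ind_{S_lambda}^{S_n} 1 and in Ind_{S_lambda'}^{S_n} sgn (Young symmetrizer
   construction); by Frobenius reciprocity these conditions read as below. *)
Definition is_specht (la : seq nat) (i : Iirr G) : bool :=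
  (hom_dim 'chi_i (young la) (fun _ => 1) != 0)
  && (hom_dim 'chi_i (young (conj_part la)) sgnC != 0).

Definition specht_irr (la : seq nat) : Iirr G :=
  odflt 0 [pick i | is_specht la i].

Definition specht_char (la : seq nat) : 'CF(G) := 'chi_(specht_irr la).

Definition sign_signature (chi : 'CF(G)) : {set {set gT}} :=
  [set (parabolic J : {set gT}) | J in [set J : {set 'I_n} | hom_dim chi (parabolic J) sgnC != 0]].

End Sn.

(* Main.v *)
Require Import Defs.
From HB Require Import structures.
From mathcomp Require Import all_boot all_order all_algebra all_fingroup all_solvable all_field all_character.
Set Implicit Arguments. Unset Strict Implicit. Unset Printing Implicit Defensive.
Import Order.TTheory GRing.Theory Num.Theory.

Fixpoint bl (a : seq nat) (x : nat) : nat :=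
  if a is p :: a' then (if x < p then 0 else (bl a' (x - p)).+1) else 0.

Definition off a x := x - sumn (take (bl a x) a).

Lemma bl_size a x : bl a x <= size a.
Proof. elim: a x => [|p a IH] x //=; case: ifP => // _; exact: IH. Qed.

Lemma bl_mono a x y : x <= y -> bl a x <= bl a y.
Proof.
elim: a x y => [|p a IH] x y //= lxy.
case: ifP => // hx; case: ifP => hy.
  by move: hx; rewrite (leq_ltn_trans lxy hy).
by rewrite ltnS IH // leq_sub2r.
Qed.

Lemma psums_cons p a : psums (p :: a) = p :: map (addn p) (psums a).
Proof.
rewrite /psums /= take0 addn0; congr (_ :: _).
rewrite (iotaDl 1 1) -!map_comp; apply: eq_map => k /=.
by [].
Qed.

Lemma mem_psums a y : all (fun p => 0 < p) a -> 0 < y ->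
  (y \in psums a) = (bl a y != bl a y.-1).
Proof.
elim: a y => [|p a IH] y //=; move/andP=> [p0 ha] y0.
rewrite psums_cons inE.
case: (ltngtP y p) => hyp.
- rewrite (leq_ltn_trans (leq_pred y) hyp) /=.
  apply/mapP => -[z _ hz]; move: hyp; rewrite hz ltnNge; by rewrite leq_addr.
- have y1 : (y.-1 < p) = false.
    by apply/negbTE; rewrite -ltnNge -ltnS prednK.
  rewrite y1 /= eqSS.
  have -> : y.-1 - p = (y - p).-1 by rewrite -subn1 subnAC subn1.
  rewrite -IH ?subn_gt0 //.
  apply/mapP/idP => [[z hz ->]|hz]; first by rewrite addKn.
  by exists (y - p) => //; rewrite subnKC // ltnW.
- subst y; rewrite ltn_predL p0 //.
Qed.

Lemma take_bl_le a x : sumn (take (bl a x) a) <= x.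
Proof.
elim: a x => [|p a IH] x //=; case: ifP => //= hx.
have hpx : p <= x by rewrite leqNgt hx.
by rewrite -{2}(subnKC hpx) leq_add2l IH.
Qed.

Lemma iota_split p s : iota 0 (p + s) = iota 0 p ++ map (addn p) (iota 0 s).
Proof. by rewrite iotaD add0n -(addn0 p) iotaDl addn0. Qed.

Lemma bl_addl p a w : bl (p :: a) (p + w) = (bl a w).+1.
Proof. by rewrite /= ltnNge leq_addr /= addKn. Qed.

Lemma bl_lt p a w : w < p -> bl (p :: a) w = 0.
Proof. by move=> h; rewrite /= h. Qed.

Lemma count_iota_lt (P : pred nat) p s :
  count P (iota 0 (p + s)) =
  count P (iota 0 p) + count (fun w => P (p + w)) (iota 0 s).
Proof. by rewrite iota_split count_cat count_map. Qed.

Lemma count_bl_eq a j :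
  count (fun w => bl a w == j) (iota 0 (sumn a)) = nth 0 a j.
Proof.
elim: a j => [|p a IH] j; first by rewrite /= nth_nil.
rewrite [sumn _]/= count_iota_lt.
rewrite (eq_in_count (a2 := fun _ => 0 == j)); last first.
  by move=> w; rewrite mem_iota add0n => /andP[_ h]; rewrite bl_lt.
rewrite (eq_count (a2 := fun w => (bl a w).+1 == j)); last by move=> w; rewrite bl_addl.
case: j => [|j] /=.
  by rewrite count_predT size_iota (eq_count (a2 := pred0)) // count_pred0 addn0.
by rewrite (eq_count (a2 := pred0)) // count_pred0 add0n -IH; apply: eq_count => w; rewrite eqSS.
Qed.

Lemma count_bl_lt a k :
  count (fun w => bl a w < k) (iota 0 (sumn a)) = sumn (take k a).
Proof.
elim: a k => [|p a IH] k; first by case: k.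
rewrite [sumn _]/= count_iota_lt.
rewrite (eq_in_count (a2 := fun _ => 0 < k)); last first.
  by move=> w; rewrite mem_iota add0n => /andP[_ h]; rewrite bl_lt.
rewrite (eq_count (a2 := fun w => (bl a w).+1 < k)); last by move=> w; rewrite bl_addl.
case: k => [|k] /=.
  by rewrite (eq_count (a2 := pred0)) // count_pred0 (eq_count (a2 := pred0)) // count_pred0.
by rewrite count_predT size_iota IH.
Qed.

Lemma off_addl p a w : off (p :: a) (p + w) = off a w.
Proof. by rewrite /off bl_addl /= subnDA addKn. Qed.

Lemma off_lt p a w : w < p -> off (p :: a) w = w.
Proof. by move=> h; rewrite /off bl_lt // take0 subn0. Qed.

Lemma count_off a j :
  count (fun w => off a w == j) (iota 0 (sumn a)) = count (fun p => j < p) a.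
Proof.
elim: a => [|p a IH]; first by [].
rewrite [sumn _]/= count_iota_lt.
rewrite (eq_in_count (a2 := fun w => w == j)); last first.
  by move=> w; rewrite mem_iota add0n => /andP[_ h]; rewrite off_lt.
rewrite (eq_count (a2 := fun w => off a w == j)); last by move=> w; rewrite off_addl.
by rewrite IH (count_uniq_mem _ (iota_uniq 0 p)) mem_iota.
Qed.

Lemma off_inj a x y : bl a x = bl a y -> off a x = off a y -> x = y.
Proof.
move=> hb ho; move: ho; rewrite /off hb => ho.
by rewrite -(subnK (take_bl_le a y)) -ho -hb subnK // take_bl_le.
Qed.

Section Young.
Variable n : nat.
Local Notation gT := {perm 'I_n}.

Lemma simple_transpE (i : 'I_n) (h : i.+1 < n) :
  simple_transp i = tperm i (Ordinal h).
Proof. by congr tperm; apply: val_inj; rewrite val_insubd h. Qed.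

Lemma young_gen a (i : 'I_n) (h : i.+1 < n) : all (fun p => 0 < p) a ->
  bl a i.+1 = bl a i -> tperm i (Ordinal h) \in young n a.
Proof.
move=> ha hb; rewrite -simple_transpE; apply: mem_gen; apply: imset_f.
rewrite !inE h /= mem_psums //= hb eqxx //.
Qed.

Lemma young_pres a (g : gT) : all (fun p => 0 < p) a -> g \in young n a ->
  forall x, bl a (g x) = bl a x.
Proof.
move=> ha /gen_prodgP [m [c hc ->]].
apply: (big_ind (fun g : gT => forall x, bl a (g x) = bl a x)).
- by move=> x; rewrite perm1.
- by move=> g1 g2 h1 h2 x; rewrite permM h2 h1.
move=> i _; case/imsetP: (hc i) => j; rewrite !inE => /andP[/andP[h1 h2] _] ->.
rewrite (simple_transpE h1) => x.
have hb : bl a j.+1 = bl a j.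
  by apply/eqP; move: h2; rewrite mem_psums //= negbK.
by case: tpermP => // ->.
Qed.

Lemma young_tperm a (x y : 'I_n) : all (fun p => 0 < p) a ->
  bl a x = bl a y -> tperm x y \in young n a.
Proof.
move=> ha.
wlog lxy : x y / x <= y.
  move=> W; case: (leqP x y) => h; first exact: W.
  by move=> e; rewrite tpermC W // ltnW.
move=> hb0.
suff main : forall d (y : 'I_n), val y = x + d -> bl a x = bl a y -> tperm x y \in young n a.
  by apply: (main (y - x)); rewrite ?subnKC.
clear hb0 lxy y.
elim => [|d IH] y hy hb.
  by rewrite (_ : y = x) ?tperm1 ?group1 //; apply: val_inj; rewrite hy addn0.
have hy' : x + d < n by apply: leq_ltn_trans (ltn_ord y); rewrite hy addnS.
set y' := Ordinal hy'.
have hb' : bl a x = bl a y'.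
  apply/eqP; rewrite eqn_leq bl_mono ?leq_addr //=.
  by rewrite hb bl_mono // hy addnS.
have hy2 : y'.+1 < n.
  change ((x + d).+1 < n); rewrite -addnS -hy; exact: ltn_ord.
have hyy : y = Ordinal hy2.
  by apply: val_inj; rewrite /= hy addnS.
have ht : tperm y' y \in young n a.
  rewrite hyy; apply: young_gen => //=.
  by rewrite -addnS -hy -hb -hb'.
have := groupJ ht (IH y' erefl hb').
rewrite tpermJ tpermR tpermD //.
  by apply/eqP => /(congr1 val) /=; rewrite hy -{1}(addn0 x) => /addnI.
apply/negP => /eqP /(congr1 val) /=; rewrite hy addnS => /eqP; by rewrite eqn_leq ltnn andbF.
Qed.

End Young.

Lemma sum_ltn_ind N p : \sum_(j < N) (j < p : nat) = minn p N.
Proof.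
elim: N => [|N IH]; first by rewrite big_ord0 minn0.
rewrite big_ord_recr /= IH.
case: (leqP p N) => h.
  by rewrite (minn_idPl (leqW h)) addn0.
by rewrite addn1 (minn_idPr h).
Qed.

Lemma sum_count_ltn N s : all (fun p => p <= N) s ->
  \sum_(j < N) count (fun p => j < p) s = sumn s.
Proof.
elim: s => [|p s IH] /=; first by rewrite big1.
move=> /andP[hp hs]; rewrite big_split /= IH // sum_ltn_ind (minn_idPl hp).
by [].
Qed.

Lemma sorted_all_le x s : sorted geq (x :: s) -> all (fun p => p <= x) s.
Proof.
move=> hs; have := order_path_min (leT := geq) _ hs.
by apply => // a b c hab hbc; exact: leq_trans hbc hab.
Qed.

Lemma part_all_le_head la : sorted geq la -> all (fun p => p <= head 0 la) la.
Proof. by case: la => //= x s hs; rewrite leqnn /= sorted_all_le. Qed.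

Lemma count_take_sorted j s k : sorted geq s ->
  count (fun p => j < p) (take k s) = minn k (count (fun p => j < p) s).
Proof.
elim: s k => [|p s IH] k /=; first by case: k.
move=> hs; have hs' : sorted geq s by case: s hs {IH} => //= x s /andP[].
case: k => [|k] /=; first by rewrite min0n.
case: (ltnP j p) => hjp /=.
  by rewrite IH // add1n minnSS.
have h0 : forall t, all (fun q => q <= p) t -> count (fun q => j < q) t = 0.
  move=> t ht; apply/eqP; rewrite -leqn0 leqNgt -has_count; apply/hasP => -[q hq hjq].
  by move: (allP ht q hq) => hqp; move: (leq_ltn_trans hqp (leq_ltn_trans hjp hjq)); rewrite ltnn.
have hp : all (fun q => q <= p) s by exact: sorted_all_le.
rewrite !add0n !h0 ?minn0 //; apply/allP => q /mem_take; exact: (allP hp).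
Qed.

Lemma sumn_take_S s k : sumn (take k.+1 s) = sumn (take k s) + nth 0 s k.
Proof.
elim: s k => [|p s IH] k /=; first by rewrite nth_nil.
by case: k => [|k] /=; rewrite ?take0 ?addn0 // IH addnA.
Qed.

Lemma dom_antisym n la mu : is_part n la -> is_part n mu ->
  (forall k, sumn (take k la) = sumn (take k mu)) -> la = mu.
Proof.
move=> /and3P[_ pla _] /and3P[_ pmu _] h.
have hn : forall k, nth 0 la k = nth 0 mu k.
  by move=> k; move: (h k.+1); rewrite !sumn_take_S h => /addnI.
have hs : size la = size mu.
  case: (ltngtP (size la) (size mu)) => // hlt.
    move: (hn (size la)); rewrite nth_default // => h0.
    by move: (allP pmu _ (mem_nth 0 hlt)); rewrite -h0.
  move: (hn (size mu)); rewrite [nth 0 mu _]nth_default // => h0.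
  by move: (allP pla _ (mem_nth 0 hlt)); rewrite h0.
by apply: (eq_from_nth (x0 := 0)) => // i _.
Qed.

Section Conj.
Variables (n : nat) (la : seq nat).
Hypothesis hla : is_part n la.

Lemma conj_size : size (conj_part la) = head 0 la.
Proof. by rewrite /conj_part size_map size_iota. Qed.

Lemma head_le : head 0 la <= n.
Proof.
move: hla => /and3P[_ _ /eqP <-]; case: la => //= x s.
exact: leq_addr.
Qed.

Lemma conj_nth j : nth 0 (conj_part la) j = count (fun p => j < p) la.
Proof.
move: hla => /and3P[hs _ _].
case: (ltnP j (head 0 la)) => hj.
  by rewrite /conj_part (nth_map 0) ?size_iota // nth_iota.
rewrite nth_default ?conj_size //.
apply/esym/eqP; rewrite -leqn0 leqNgt -has_count; apply/hasP => -[q hq hjq].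
move: (allP (part_all_le_head hs) q hq) => hqp.
by move: (leq_trans hjq (leq_trans hqp hj)); rewrite ltnn.
Qed.

Lemma conj_pos : all (fun p => 0 < p) (conj_part la).
Proof.
apply/allP => p /mapP [j]; rewrite mem_iota add0n => /andP[_ hj] ->.
rewrite -has_count; apply/hasP; exists (head 0 la) => //.
by case: la hj => //= x s _; rewrite inE eqxx.
Qed.

Lemma conj_sum : sumn (conj_part la) = n.
Proof.
move: hla => /and3P[hs _ /eqP <-].
rewrite -(sum_count_ltn (part_all_le_head hs)) /conj_part.
rewrite sumnE big_map -val_enum_ord big_map.
by rewrite big_enum.
Qed.

Lemma all_le_n : all (fun p => p <= n) la.
Proof.
move: hla => /and3P[hs _ _]; apply/allP => p hp.
exact: leq_trans (allP (part_all_le_head hs) p hp) head_le.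
Qed.

End Conj.

Lemma fiber_perm (T : finType) (f g : T -> nat) :
  (forall j, count (fun w => f w == j) (enum T) = count (fun w => g w == j) (enum T)) ->
  exists s : {perm T}, forall w, g (s w) = f w.
Proof.
move=> hfg.
set e := enum T.
set s1 := sort (relpre f leq) e; set s2 := sort (relpre g leq) e.
have ms1 : forall w, w \in s1 by move=> w; rewrite mem_sort mem_enum.
have sz : size s2 = size s1 by rewrite !size_sort.
have u2 : uniq s2 by rewrite sort_uniq enum_uniq.
have hmap : map g s2 = map f s1.
  rewrite -!sort_map; apply/perm_sortP => //; [exact: leq_total|exact: leq_trans|exact: anti_leq|].
  rewrite /perm_eq; apply/allP => j _ /=; rewrite !count_map.
  by apply/eqP; rewrite -enumT; exact: (esym (hfg j)).
have hidx : forall w, index w s1 < size s2 by move=> w; rewrite sz index_mem.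
pose sg w := nth w s2 (index w s1).
have sgE : forall w x0, sg w = nth x0 s2 (index w s1).
  by move=> w x0; rewrite /sg (set_nth_default x0).
have sg_inj : injective sg.
  move=> w1 w2; rewrite (sgE w1 w1) (sgE w2 w1) => /eqP.
  rewrite nth_uniq // => /eqP hi.
  by rewrite -(nth_index w1 (ms1 w1)) hi nth_index.
exists (perm sg_inj) => w; rewrite permE (sgE w w).
rewrite -(nth_map w (g w)) // hmap (nth_map w) ?nth_index //.
by rewrite index_mem.
Qed.

Section Chars.
Variable n : nat.
Local Notation gT := {perm 'I_n}.
Local Notation G := [set: gT]%G.
Local Open Scope ring_scope.

Definition sgn_mx (x : gT) : 'M[algC]_1 := (sgnC x)%:M.

Fact sgn_is_repr : mx_repr G sgn_mx.
Proof.
split; first by rewrite /sgn_mx /sgnC odd_perm1.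
by move=> x y _ _; rewrite /sgn_mx /sgnC odd_permM signr_addb scalar_mxM.
Qed.

Definition sgn_repr := MxRepresentation sgn_is_repr.
Definition sgnChar : 'CF(G) := cfRepr sgn_repr.

Lemma sgnCharE x : sgnChar x = sgnC x.
Proof. by rewrite cfunE inE mulr1n /= /sgn_mx mxtrace_scalar. Qed.

Lemma sgnChar_char : sgnChar \is a character.
Proof. exact: cfRepr_char. Qed.

Lemma hom_dim_Ind (P : {group gT}) (phi : 'CF(P)) (f : gT -> algC) (chi : 'CF(G)) :
  phi \is a character -> chi \is a character ->
  {in P, forall x, phi x = f x} ->
  hom_dim chi P f = '['Ind[G] phi, chi].
Proof.
move=> Nphi Nchi hf.
rewrite -(Frobenius_reciprocity phi chi).
rewrite -(conj_natr (x := '[phi, 'Res[P] chi])); last by rewrite Cnat_cfdot_char ?cfRes_char.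
rewrite -cfdotC cfdotE /hom_dim; congr (_ * _); apply: eq_bigr => x Px.
by rewrite cfResE ?subsetT // hf.
Qed.

Definition goodc (P Q : {set gT}) (y : gT) :=
  [forall x, (x \in P) && ((x ^ y)%g \in Q) ==> ~~ odd_perm x].

Lemma E_eq (P Q : {group gT}) y :
  \sum_(x in P) (if (x ^ y)%g \in Q then sgnC x else 0) =
  (if goodc P Q y then #|[pred x | (x \in P) && ((x ^ y)%g \in Q)]| else 0%N)%:R.
Proof.
case: ifP => hg.
  rewrite (eq_bigr (fun x => if (x ^ y)%g \in Q then 1 else 0)); last first.
    move=> x Px; case: ifP => // hQ.
    by have := forallP hg x; rewrite Px hQ /= /sgnC => /negbTE ->.
  rewrite -big_mkcondr /= sumr_const.
  by rewrite -[in RHS](mulr1n 1) ?mulr_natl.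
move/negbT: hg; rewrite negb_forall => /existsP [t]; rewrite negb_imply negbK.
case/andP => /andP [Pt Qt] odt.
set E := \sum_(x in P) _.
have : E = - E.
  rewrite {1}/E big_mkcond /= (reindex_inj (mulgI t)) /=.
  rewrite /E -sumrN [in RHS]big_mkcond /=.
  apply: eq_bigr => x _.
  rewrite groupMl // conjMg groupMl //.
  case: ifP => // _; case: ifP => // _; last by rewrite oppr0.
  by rewrite /sgnC odd_permM odt signr_addb expr1 mulN1r.
move/eqP; rewrite -subr_eq0 opprK -mulr2n mulrn_eq0 /= => /eqP ->.
by [].
Qed.


Lemma goodc_card (P Q : {group gT}) y :
  (0 < #|[pred x | (x \in P) && ((x ^ y)%g \in Q)]|)%N.
Proof. by apply/card_gt0P; exists 1%g; rewrite inE group1 conj1g group1. Qed.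

Lemma key (P Q : {group gT}) :
  (exists i : Iirr G, hom_dim 'chi_i P (fun=> 1) != 0 /\ hom_dim 'chi_i Q (@sgnC n) != 0)
  <-> exists y, goodc P Q y.
Proof.
set phi := (1 : 'CF(P)).
set sQ := 'Res[Q] sgnChar.
have Nphi : phi \is a character by exact: cfun1_char.
have NsQ : sQ \is a character by rewrite cfRes_char // sgnChar_char.
have ha : forall i : Iirr G, hom_dim 'chi_i P (fun=> 1) = '['Ind[G] phi, 'chi_i].
  move=> i; apply: hom_dim_Ind => //; first exact: irr_char.
  by move=> x Px; rewrite /phi cfun1E Px.
have hb : forall i : Iirr G, hom_dim 'chi_i Q (@sgnC n) = '['Ind[G] sQ, 'chi_i].
  move=> i; apply: hom_dim_Ind => //; first exact: irr_char.
  by move=> x Qx; rewrite /sQ cfResE ?subsetT // sgnCharE.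
have Na : forall i : Iirr G, '['Ind[G] phi, 'chi_i] \is a Num.nat.
  by move=> i; rewrite Cnat_cfdot_char_irr // cfInd_char.
have Nb : forall i : Iirr G, '['Ind[G] sQ, 'chi_i] \is a Num.nat.
  by move=> i; rewrite Cnat_cfdot_char_irr // cfInd_char.
have hS : '['Ind[G] phi, 'Ind[G] sQ] =
          \sum_i '['Ind[G] phi, 'chi_i] * '['Ind[G] sQ, 'chi_i].
  by rewrite cfdot_sum_irr; apply: eq_bigr => i _; rewrite conj_natr.
have step1 : (exists i : Iirr G, hom_dim 'chi_i P (fun=> 1) != 0 /\ hom_dim 'chi_i Q (@sgnC n) != 0)
   <-> '['Ind[G] phi, 'Ind[G] sQ] != 0.
  split.
    move=> [i [h1 h2]]; rewrite hS; apply/eqP => /psumr_eq0P h0.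
    have := h0 (fun j _ => mulr_ge0 (natr_ge0 (Na j)) (natr_ge0 (Nb j))) i isT.
    by move/eqP; rewrite mulf_eq0 -ha -hb (negbTE h1) (negbTE h2).
  rewrite hS => hne.
  case: (pickP (fun i : Iirr G => '['Ind[G] phi, 'chi_i] * '['Ind[G] sQ, 'chi_i] != 0)) => [i hi|h0].
    by exists i; move: hi; rewrite mulf_eq0 negb_or ha hb => /andP.
  by move: hne; rewrite big1 ?eqxx // => i _; apply/eqP; move: (h0 i) => /= /negbFE.
apply: iff_trans step1 _.
rewrite -(Frobenius_reciprocity phi) cfdotE.
have hx : forall x, x \in P -> phi x * ('Res[P] ('Ind[G] sQ) x)^* =
   (#|Q|%:R^-1 * \sum_(y in G) (if (x ^ y)%g \in Q then sgnC x else 0))^*.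
  move=> x Px; rewrite /phi cfun1E Px mul1r cfResE ?subsetT // cfIndE ?subsetT //.
  congr (_ * _)^*; apply: eq_bigr => y _; rewrite /sQ.
  case: ifP => hQ; first by rewrite cfResE ?subsetT // sgnCharE /sgnC odd_permJ.
  by rewrite cfun0 // hQ.
rewrite (eq_bigr _ hx) -rmorph_sum -mulr_sumr exchange_big /=.
rewrite (eq_bigr _ (fun y _ => E_eq P Q y)) -natr_sum.
rewrite mulf_eq0 invr_eq0 (negbTE (neq0CG P)) /= conjC_eq0 mulf_eq0 invr_eq0.
rewrite (negbTE (neq0CG Q)) /= pnatr_eq0 sum_nat_eq0 negb_forall.
split.
  case/existsP => y; rewrite negb_imply => /andP[_]; case: ifP => // hg _.
  by exists y.
move=> [y hg]; apply/existsP; exists y; rewrite negb_imply inE hg /=.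
by rewrite -lt0n goodc_card.
Qed.

End Chars.

Lemma card_ord_count n (P : pred nat) : #|[set w : 'I_n | P w]| = count P (iota 0 n).
Proof. by rewrite -sum1dep_card -(big_mkord P (fun=> 1)) sum1_count /index_iota subn0. Qed.

Lemma count_enum_ord n (P : pred nat) :
  count (fun w : 'I_n => P w) (enum 'I_n) = count P (iota 0 n).
Proof. by rewrite -val_enum_ord count_map. Qed.

Section Main.
Variable n : nat.
Local Notation gT := {perm 'I_n}.

Lemma good_inj (al be : seq nat) (y : gT) :
  all (fun p => 0 < p) al -> all (fun p => 0 < p) be ->
  goodc (young n al) (young n be) y ->
  injective (fun w : 'I_n => (bl al w, bl be (y w))).
Proof.
move=> pa pb hg w1 w2 [h1 h2].
have t1 : tperm w1 w2 \in young n al by apply: young_tperm.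
have t2 : (tperm w1 w2 ^ y)%g \in young n be by rewrite tpermJ; apply: young_tperm.
have := forallP hg (tperm w1 w2); rewrite t1 t2 /= odd_tperm negbK.
by move/eqP.
Qed.

Lemma inj_good (al be : seq nat) (y : gT) :
  all (fun p => 0 < p) al -> all (fun p => 0 < p) be ->
  injective (fun w : 'I_n => (bl al w, bl be (y w))) ->
  goodc (young n al) (young n be) y.
Proof.
move=> pa pb hinj; apply/forallP => x; apply/implyP => /andP[Px Qx].
suff -> : x = 1%g by rewrite odd_perm1.
apply/permP => w; rewrite perm1; apply: hinj; congr pair.
  exact: young_pres Px w.
have := young_pres pb Qx (y w).
by rewrite conjgE !permM permK.
Qed.

Lemma exist_inj (la : seq nat) : is_part n la ->
  exists y : gT, injective (fun w : 'I_n => (bl la w, bl (conj_part la) (y w))).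
Proof.
move=> hla.
have [y hy] : exists y : gT, forall w, bl (conj_part la) (y w) = off la w.
  apply: (@fiber_perm _ (fun w : 'I_n => off la w) (fun w : 'I_n => bl (conj_part la) w)) => j.
  rewrite (count_enum_ord n (fun w => off la w == j)).
  rewrite (count_enum_ord n (fun w => bl (conj_part la) w == j)).
  have := count_bl_eq (conj_part la) j; rewrite (conj_sum hla) (conj_nth hla) => ->.
  have := count_off la j; move: hla => /and3P[_ _ /eqP ->] => ->.
  by [].
exists y => w1 w2 [h1 h2]; apply: val_inj; apply: (off_inj h1).
by rewrite -!hy.
Qed.

Lemma dominance (mu la : seq nat) (y : gT) : is_part n mu -> is_part n la ->
  injective (fun w : 'I_n => (bl mu w, bl (conj_part la) (y w))) ->
  forall k, sumn (take k mu) <= sumn (take k la).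
Proof.
move=> hmu hla hinj k.
set be := conj_part la.
set A := [set w : 'I_n | bl mu w < k].
have cA : #|A| = sumn (take k mu).
  rewrite /A (card_ord_count n (fun v => bl mu v < k)); have := count_bl_lt mu k.
  by move: hmu => /and3P[_ _ /eqP ->].
have hbe : forall v, bl be v < n.+1.
  move=> v; rewrite ltnS; apply: leq_trans (bl_size _ _) _.
  by rewrite (conj_size la) (head_le hla).
pose S (j : 'I_n.+1) := [set w in A | bl be (y w) == j].
have cS : #|A| = \sum_(j < n.+1) #|S j|.
  rewrite -sum1_card.
  rewrite (eq_bigr (fun w => \sum_(j < n.+1) (bl be (y w) == j : nat))); last first.
    move=> w _; rewrite (bigD1 (inord (bl be (y w)))) //= inordK ?hbe // eqxx.
    rewrite big1 // => j hj; apply/eqP; rewrite eqb0; apply: contra hj => /eqP ->.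
    by apply/eqP; apply: val_inj; rewrite /= inordK.
  rewrite exchange_big /=; apply: eq_bigr => j _.
  by rewrite -sum1dep_card big_mkcondr /=; apply: eq_bigr => w _; case: (_ == _).
have bS : forall j, #|S j| <= count (fun p => j < p) (take k la).
  move=> j; rewrite count_take_sorted; last by case/and3P: hla.
  rewrite leq_min; apply/andP; split.
    rewrite cardE -(size_map (fun w : 'I_n => bl mu w) (enum (S j))) -(size_iota 0 k); apply: uniq_leq_size.
      rewrite map_inj_in_uniq ?enum_uniq // => w1 w2.
      rewrite !mem_enum !inE => /andP[_ /eqP e1] /andP[_ /eqP e2] e.
      by apply: hinj; rewrite /= e e1 e2.
    move=> v /mapP [w]; rewrite mem_enum !inE => /andP[hw _] ->.
    by rewrite mem_iota.
  rewrite -(conj_nth hla).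
  apply: leq_trans (_ : #|y @^-1: [set v : 'I_n | bl be v == j]| <= _).
    by apply: subset_leq_card; apply/subsetP => w; rewrite !inE => /andP[].
  rewrite card_preimset; last exact: perm_inj.
  rewrite (card_ord_count n (fun v => bl be v == j)); have := count_bl_eq be j.
  by rewrite (conj_sum hla) => ->.
rewrite -cA cS; apply: (@leq_trans (\sum_(j < n.+1) count (fun p => j < p) (take k la))).
  by apply: leq_sum => j _; exact: bS.
rewrite sum_count_ltn //; apply/allP => p /mem_take hp.
by apply: leqW; apply: (allP (all_le_n hla)).
Qed.

End Main.

Lemma specht_ok n la : is_part n la -> is_specht la (specht_irr n la).
Proof.
move=> hla; have [y hy] := exist_inj hla.
have pla : all (fun p => 0 < p) la by case/and3P: hla.
have hg := inj_good pla (conj_pos la) hy.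
have [i [h1 h2]] := (key (young n la) (young n (conj_part la))).2 (ex_intro _ y hg).
rewrite /specht_irr; case: pickP => [j hj|h0] //=.
by move: (h0 i); rewrite /is_specht h1 h2.
Qed.

Lemma sig_in n (chi : 'CF([set: {perm 'I_n}])) a :
  hom_dim chi (young n a) (@sgnC n) != 0%R ->
  (young n a : {set {perm 'I_n}}) \in sign_signature chi.
Proof. by move=> h; apply/imsetP; exists (young_set n a) => //; rewrite inE. Qed.

Lemma sig_out n (chi : 'CF([set: {perm 'I_n}])) a :
  (young n a : {set {perm 'I_n}}) \in sign_signature chi ->
  hom_dim chi (young n a) (@sgnC n) != 0%R.
Proof. by case/imsetP => J; rewrite inE => hJ ->. Qed.

Theorem proposition3p10 (n : nat) (la mu : seq nat) :
  is_part n la -> is_part n mu -> la <> mu ->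
  sign_signature (specht_char n la) <> sign_signature (specht_char n mu).
Proof.
move=> hla hmu neq heq; apply: neq.
have dom : forall l m, is_part n l -> is_part n m ->
    sign_signature (specht_char n l) = sign_signature (specht_char n m) ->
    forall k, sumn (take k m) <= sumn (take k l).
  move=> l m hl hm e k.
  have /andP[_ s1] := specht_ok hl.
  have := sig_in s1; rewrite /specht_char in e; rewrite e => /sig_out s2.
  have /andP[t1 _] := specht_ok hm.
  have [y hy] := (key (young n m) (young n (conj_part l))).1
                   (ex_intro _ (specht_irr n m) (conj t1 s2)).
  have pm : all (fun p => 0 < p) m by case/and3P: hm.
  have hinj := good_inj pm (conj_pos l) hy.
  exact: dominance hm hl hinj k.
apply: (dom_antisym hla hmu) => k; apply/eqP; rewrite eqn_leq.
by rewrite (dom _ _ hmu hla (esym heq)) (dom _ _ hla hmu heq).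
Qed.
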